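(* Let $f:\mathbb{R}^N\times\mathbb{R}\to\mathbb{R}^N$ be $C^1$ with $f(x,t+T)=f(x,t)$ for all $x,t$, for some $T>0$, and let $x_\ast$ be a $T$-periodic (not necessarily minimal period) solution of $\dot x(t)=f(x(t),t)$. Let $K\in\mathbb{R}^{N\times N}$ be arbitrary. Then the geometric multiplicity of $1$ as an eigenvalue of the monodromy matrix $Y_0(T)$ of the uncontrolled linearization $\dot y(t)=\partial_x f(x_\ast(t),t)y(t)$ equals the geometric multiplicity of $1$ as an eigenvalue of the monodromy operator $Y_1(T)$ of the controlled linearization $\dot y(t)=\partial_x f(x_\ast(t),t)y(t)+K[y(t)-y(t-T)]$. (By convention the geometric multiplicity is $0$ if $1$ is not an eigenvalue.)
   Context: For a $T$-periodic continuous matrix function $A(t)$, $Y_0(t)\in\mathbb{R}^{N\times N}$ denotes the fundamental solution of $\dot y=A(t)y$ with $Y_0(0)=I$; $Y_0(T)$ is the monodromy matrix, its eigenvalues are the Floquet multipliers, and the geometric multiplicity of an eigenvalue $\mu$ is $\dim\{x\in\mathbb{C}^N:\mu x=Y_0(T)x\}$. For the delay equation $\dot y(t)=A(t)y(t)+K[y(t)-y(t-T)]$, for $\phi\in C([-T,0],\mathbb{C}^N)$ let $y^\phi$ be the unique solution on $[-T,\infty)$ with $y^\phi=\phi$ on $[-T,0]$, and set $(Y_1(t)\phi)(\theta)=y^\phi(t+\theta)$, $\theta\in[-T,0]$. The monodromy operator is $Y_1(T)$ acting on $C([-T,0],\mathbb{C}^N)$; its nonzero eigenvalues are the Floquet multipliers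 of the delay equation, and the geometric multiplicity of an eigenvalue $\mu$ is $\dim\{\phi: \mu\phi=Y_1(T)\phi\}$. *)

(* Defs.v *)
From HB Require Import structures.
From mathcomp Require Import all_boot all_order all_algebra.
From mathcomp Require Import all_classical all_reals all_analysis.
From mathcomp Require Import Rstruct Rstruct_topology.
From mathcomp Require Import complex.
From Stdlib Require Import Rdefinitions.
Set Implicit Arguments. Unset Strict Implicit. Unset Printing Implicit Defensive.
Import Order.TTheory GRing.Theory Num.Theory.
Import numFieldNormedType.Exports.
Local Open Scope classical_set_scope.
Local Open Scope ring_scope.

Notation CC := (complex R).
Definition cR (r : R) : CC := (r%:C)%C.

Definition reV N (v : 'cV[CC]_N) : 'cV[R]_N := map_mx (@complex.Re R) v.
Definition imV N (v : 'cV[CC]_N) : 'cV[R]_N := map_mx (@complex.Im R) v.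
Definition cmx m n (M : 'M[R]_(m, n)) : 'M[CC]_(m, n) := map_mx cR M.

Definition C1 N (f : 'cV[R]_N -> R -> 'cV[R]_N) : Prop :=
  let F := fun p : ('cV[R]_N * R^o)%type => f p.1 p.2 in
  (forall p, differentiable F p) /\
  (forall v : ('cV[R]_N * R^o)%type, continuous (fun p => 'D_v F p)).

Definition periodic_solution N (f : 'cV[R]_N -> R -> 'cV[R]_N) (T : R)
  (xs : R -> 'cV[R]_N) : Prop :=
  (forall t, xs (t + T) = xs t) /\ (forall t : R^o, is_derive t 1 (xs : R^o -> 'cV[R]_N) (f (xs t) t)).

Definition linA N (f : 'cV[R]_N -> R -> 'cV[R]_N) (xs : R -> 'cV[R]_N)
  (t : R) : 'M[R]_N :=
  \matrix_(i, j) ('D_(delta_mx j 0) (fun x => f x t) (xs t)) i 0.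

Definition fundamental_solution N (A : R -> 'M[R]_N) (Y0 : R -> 'M[R]_N) : Prop :=
  Y0 0 = 1%:M /\ (forall t : R^o, is_derive t 1 (Y0 : R^o -> 'M[R]_N) (A t *m Y0 t)).

(* geometric multiplicity of 1 as eigenvalue of a real matrix M, computed over C:
   dim {x in C^N | 1 x = M x} = dim of the (right) kernel of (M - I) over C *)
Definition geom_mult1 N (M : 'M[R]_N) : nat :=
  \rank (kermx (cmx M - 1%:M)^T).

(* calculus for C^N-valued functions of a real variable, via real and
   imaginary parts (C^N = R^N + i R^N as a real normed space) *)
Definition ccont_within N (D : set R) (y : R -> 'cV[CC]_N) : Prop :=
  {within D, continuous (fun t => reV (y t))} /\
  {within D, continuous (fun t => imV (y t))}.
Definition cderive N (y : R -> 'cV[CC]_N) (t : R) (dy : 'cV[CC]_N) : Prop :=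
  is_derive (t : R^o) 1 (fun s : R^o => reV (y s)) (reV dy) /\
  is_derive (t : R^o) 1 (fun s : R^o => imV (y s)) (imV dy).
Definition cright_derive N (y : R -> 'cV[CC]_N) (t : R) (dy : 'cV[CC]_N) : Prop :=
  ((fun h : R => h^-1 *: (reV (y (t + h)) - reV (y t))) @ 0^'+ --> reV dy) /\
  ((fun h : R => h^-1 *: (imV (y (t + h)) - imV (y t))) @ 0^'+ --> imV dy).

Definition dde_solution N (A : R -> 'M[R]_N) (K : 'M[R]_N) (T : R)
  (phi y : R -> 'cV[CC]_N) : Prop :=
  (forall s, -T <= s <= 0 -> y s = phi s) /\
  ccont_within `[-T, +oo[ y /\
  (forall t, 0 < t ->
     cderive y t (cmx (A t) *m y t + cmx K *m (y t - y (t - T)))) /\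
  cright_derive y 0 (cmx (A 0) *m y 0 + cmx K *m (y 0 - y (0 - T))).

(* the eigenspace {phi in C([-T,0],C^N) | Y1(T) phi = 1 * phi}; an element of
   C([-T,0],C^N) is represented by a function R -> C^N of which only the values on
   [-T,0] matter *)
Definition Y1_eigenspace1 N (A : R -> 'M[R]_N) (K : 'M[R]_N) (T : R) :
  set (R -> 'cV[CC]_N) :=
  [set phi | ccont_within `[-T, 0] phi /\
     exists y, dde_solution A K T phi y /\
       (forall s, -T <= s <= 0 -> y (T + s) = phi s)].

(* the complex subspace S of C(D, C^N) has dimension d: it has a basis of d
   elements (functions being identified when they agree on D) *)
Definition has_dim N (D : set R) (S : set (R -> 'cV[CC]_N)) (d : nat) : Prop :=
  exists b : 'I_d -> R -> 'cV[CC]_N,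
    (forall i, S (b i)) /\
    (forall c : 'I_d -> CC,
        (forall s, D s -> \sum_(i < d) c i *: b i s = 0) -> forall i, c i = 0) /\
    (forall phi, S phi ->
        exists c : 'I_d -> CC, forall s, D s -> phi s = \sum_(i < d) c i *: b i s).

(* Main.v *)
Require Import Defs.
From HB Require Import structures.
From mathcomp Require Import all_boot all_order all_algebra.
From mathcomp Require Import all_classical all_reals all_analysis.
From mathcomp Require Import Rstruct Rstruct_topology.
From mathcomp Require Import complex.
From Stdlib Require Import Rdefinitions.
Import Order.TTheory GRing.Theory Num.Theory.
Import numFieldNormedType.Exports.
Local Open Scope classical_set_scope.
Local Open Scope ring_scope.
Set Implicit Arguments. Unset Strict Implicit. Unset Printing Implicit Defensive.
From mathcomp Require Import lra ring.
Lemma is_derive_entry m n (F : R^o -> 'M[R]_(m, n)) (t : R^o) (dF : 'M[R]_(m, n)) i j :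
  is_derive t 1 F dF -> is_derive t 1 (fun s : R^o => (F s i j : R^o)) (dF i j).
Proof.
move=> [dF1 vF]; have := (derivable_mxP F t 1).1 dF1 i j => di.
apply: DeriveDef => //.
by rewrite -vF derive_mx // mxE.
Qed.

Lemma is_derive_mx m n (F : R^o -> 'M[R]_(m, n)) (t : R^o) (dF : 'M[R]_(m, n)) :
  (forall i j, is_derive t 1 (fun s : R^o => (F s i j : R^o)) (dF i j)) ->
  is_derive t 1 F dF.
Proof.
move=> H.
have d : derivable F t 1 by apply/derivable_mxP => i j; case: (H i j).
apply: DeriveDef => //; rewrite derive_mx //; apply/matrixP => i j.
by rewrite mxE; case: (H i j).
Qed.

Lemma is_derive_mulmxr m n p (F : R^o -> 'M[R]_(m, n)) (v : 'M[R]_(n, p)) (t : R^o) (dF : 'M[R]_(m, n)) :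
  is_derive t 1 F dF -> is_derive t 1 (fun s : R^o => F s *m v) (dF *m v).
Proof.
move=> H; apply: is_derive_mx => i j.
have -> : (fun s : R^o => ((F s *m v) i j : R^o)) = \sum_(k < n) (fun s : R^o => (F s i k * v k j : R^o)).
  by apply/funext => s; rewrite mxE fct_sumE.
rewrite mxE; apply: is_derive_sum => k.
have -> : (fun s : R^o => (F s i k * v k j : R^o)) = (fun s : R^o => (F s i k : R^o)) * cst (v k j : R^o) by [].
apply: is_derive_eq.
  by apply: is_deriveM; exact: (is_derive_entry i k H).
by rewrite scaler0 add0r /= mulrC.
Qed.
Lemma is_derive_shiftarg (V : normedModType R) (F : R^o -> V) (t c : R^o) (dF : V) :
  is_derive (t + c) 1 F dF -> is_derive t 1 (fun s : R^o => F (s + c)) dF.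
Proof.
move=> [d v]; move: d; rewrite /derivable -v /derive /= => d.
have E : (fun h : R^o => h^-1 *: (F (h%:A + t + c) - F (t + c)))
   = (fun h : R^o => h^-1 *: (F (h%:A + (t + c)) - F (t + c))).
  by apply/funext => h; rewrite addrA.
by apply: DeriveDef; rewrite /derivable /derive /= E.
Qed.

Lemma is_derive_right (V : normedModType R) (F : R^o -> V) (t : R^o) (dF : V) :
  is_derive t 1 F dF -> (fun h : R => h^-1 *: (F (t + h) - F t)) @ 0^'+ --> dF.
Proof.
move=> [d v]; apply: cvg_dnbhs_at_right.
move: d; rewrite /derivable -v /derive /=.
have E : (fun h : R^o => h^-1 *: (F (h%:A + t) - F t))
   = (fun h : R => h^-1 *: (F (t + h) - F t)).
  by rewrite funeqE => h; rewrite -[h%:A]/(h * 1) mulr1 (addrC h).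
by rewrite E.
Qed.

Lemma is_derive_cont (V : normedModType R) (F : R^o -> V) (t : R^o) (dF : V) :
  is_derive t 1 F dF -> {for t, continuous F}.
Proof.
move=> [d v]; apply: differentiable_continuous; move: d.
by move/derivable1_diffP.
Qed.
Lemma ReD (x y : CC) : complex.Re (x + y) = complex.Re x + complex.Re y.
Proof. by case: x => a b; case: y. Qed.
Lemma ImD (x y : CC) : complex.Im (x + y) = complex.Im x + complex.Im y.
Proof. by case: x => a b; case: y. Qed.
Lemma ReN (x : CC) : complex.Re (- x) = - complex.Re x.
Proof. by case: x. Qed.
Lemma ImN (x : CC) : complex.Im (- x) = - complex.Im x.
Proof. by case: x. Qed.
Lemma Re0 : complex.Re (0 : CC) = 0. Proof. by []. Qed.
Lemma Im0 : complex.Im (0 : CC) = 0. Proof. by []. Qed.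
Lemma ReMr (r : R) (x : CC) : complex.Re (cR r * x) = r * complex.Re x.
Proof. by case: x => a b /=; rewrite mul0r subr0. Qed.
Lemma ImMr (r : R) (x : CC) : complex.Im (cR r * x) = r * complex.Im x.
Proof. by case: x => a b /=; rewrite mul0r addr0. Qed.

Lemma Re_sum n (F : 'I_n -> CC) : complex.Re (\sum_(i < n) F i) = \sum_(i < n) complex.Re (F i).
Proof. by elim/big_rec2: _ => [|k a b _ <-]; rewrite ?ReD. Qed.
Lemma Im_sum n (F : 'I_n -> CC) : complex.Im (\sum_(i < n) F i) = \sum_(i < n) complex.Im (F i).
Proof. by elim/big_rec2: _ => [|k a b _ <-]; rewrite ?ImD. Qed.

Lemma reV_mul N p (M : 'M[R]_N) (v : 'M[CC]_(N, p)) :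
  map_mx (@complex.Re R) (cmx M *m v) = M *m map_mx (@complex.Re R) v.
Proof.
apply/matrixP => i j; rewrite !mxE Re_sum; apply: eq_bigr => k _.
by rewrite !mxE ReMr.
Qed.
Lemma imV_mul N p (M : 'M[R]_N) (v : 'M[CC]_(N, p)) :
  map_mx (@complex.Im R) (cmx M *m v) = M *m map_mx (@complex.Im R) v.
Proof.
apply/matrixP => i j; rewrite !mxE Im_sum; apply: eq_bigr => k _.
by rewrite !mxE ImMr.
Qed.

Lemma reVD N (a b : 'cV[CC]_N) : reV (a + b) = reV a + reV b.
Proof. by apply/matrixP => i j; rewrite !mxE ReD. Qed.
Lemma imVD N (a b : 'cV[CC]_N) : imV (a + b) = imV a + imV b.
Proof. by apply/matrixP => i j; rewrite !mxE ImD. Qed.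
Lemma reVN N (a : 'cV[CC]_N) : reV (- a) = - reV a.
Proof. by apply/matrixP => i j; rewrite !mxE ReN. Qed.
Lemma imVN N (a : 'cV[CC]_N) : imV (- a) = - imV a.
Proof. by apply/matrixP => i j; rewrite !mxE ImN. Qed.
Lemma reVB N (a b : 'cV[CC]_N) : reV (a - b) = reV a - reV b.
Proof. by rewrite reVD reVN. Qed.
Lemma imVB N (a b : 'cV[CC]_N) : imV (a - b) = imV a - imV b.
Proof. by rewrite imVD imVN. Qed.
Lemma reV0 N : reV (0 : 'cV[CC]_N) = 0.
Proof. by apply/matrixP => i j; rewrite !mxE. Qed.
Lemma imV0 N : imV (0 : 'cV[CC]_N) = 0.
Proof. by apply/matrixP => i j; rewrite !mxE. Qed.
Lemma reVM N (M : 'M[R]_N) (v : 'cV[CC]_N) : reV (cmx M *m v) = M *m reV v.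
Proof. exact: reV_mul. Qed.
Lemma imVM N (M : 'M[R]_N) (v : 'cV[CC]_N) : imV (cmx M *m v) = M *m imV v.
Proof. exact: imV_mul. Qed.

Lemma reimV_inj N (a b : 'cV[CC]_N) : reV a = reV b -> imV a = imV b -> a = b.
Proof.
move=> /matrixP Hr /matrixP Hi; apply/matrixP => i j.
have := Hr i j; have := Hi i j; rewrite !mxE.
by case: (a i j) => ? ?; case: (b i j) => ? ? /= -> ->.
Qed.
Lemma two_prod_le (x y a M : R) : `|a| <= M -> 2 * x * a * y <= M * (x ^+ 2 + y ^+ 2).
Proof.
move=> /ler_normlP [h1 h2].
have e1 : 0 <= (M - a) * (x + y) ^+ 2 by apply: mulr_ge0; [lra| exact: sqr_ge0].
have e2 : 0 <= (M + a) * (x - y) ^+ 2 by apply: mulr_ge0; [lra| exact: sqr_ge0].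
nra.
Qed.

Lemma quad_bound N (A : 'M[R]_N) (u : 'cV[R]_N) (M : R) : (forall i j, `|A i j| <= M) ->
  \sum_i 2 * u i 0 * (A *m u) i 0 <= 2 * N%:R * M * \sum_i (u i 0) ^+ 2.
Proof.
move=> HM.
have -> : \sum_i 2 * u i 0 * (A *m u) i 0 = \sum_i \sum_k 2 * u i 0 * A i k * u k 0.
  apply: eq_bigr => i _; rewrite mxE mulr_sumr; apply: eq_bigr => k _.
  by rewrite mulrA.
apply: le_trans (_ : \sum_(i < N) \sum_(k < N) M * ((u i 0) ^+ 2 + (u k 0) ^+ 2) <= _).
  by apply: ler_sum => i _; apply: ler_sum => k _; apply: two_prod_le.
have -> : \sum_(i < N) \sum_(k < N) M * ((u i 0) ^+ 2 + (u k 0) ^+ 2)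
   = \sum_(i < N) \sum_(k < N) M * (u i 0) ^+ 2 + \sum_(i < N) \sum_(k < N) M * (u k 0) ^+ 2.
  rewrite -big_split; apply: eq_bigr => i _; rewrite -big_split; apply: eq_bigr => k _.
  by rewrite mulrDr.
rewrite [X in _ + X]exchange_big /=.
have E : forall i : 'I_N, \sum_(k < N) M * (u i 0) ^+ 2 = N%:R * M * (u i 0) ^+ 2.
  by move=> i; rewrite sumr_const card_ord -[_ *+ N]mulr_natl mulrA.
under eq_bigr do rewrite E.
rewrite -!mulr_sumr.
set S := \sum_(i < N) _.
lra.
Qed.
Lemma is_derive_expRM (k t : R) :
  is_derive (t : R^o) 1 (fun s : R^o => (expR (k * s) : R^o)) (k * expR (k * t)).
Proof.
have h1 : is_derive (t : R^o) 1 (fun s : R^o => (k * s : R^o)) k.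
  have := @is_deriveZ R R^o R^o id k t 1 1 (is_derive_id _ _).
  by rewrite /GRing.scale /= mulr1.
have h2 : forall x : R, is_derive (x : R^o) 1 (expR : R^o -> R^o) (expR x).
  exact: is_derive_expR.
have d1 : derivable (fun s : R^o => (k * s : R^o)) t 1 by case: h1.
have d2 : derivable (expR : R^o -> R^o) (k * t) 1 by case: (h2 (k * t)).
have -> : (fun s : R^o => (expR (k * s) : R^o)) = expR \o (fun s : R^o => (k * s : R^o)) by [].
apply: DeriveDef.
  apply/derivable1_diffP; apply: differentiable_comp; exact/derivable1_diffP.
rewrite -derive1E derive1_comp //.
rewrite !derive1E; case: (h2 (k * t)) => _ ->; case: h1 => _ ->.
by rewrite mulrC.
Qed.
Lemma sum_cont (V : topologicalType) n (F : 'I_n -> V -> R^o) :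
  (forall i, continuous (F i)) -> continuous (fun w => \sum_(i < n) F i w).
Proof.
move=> HF.
suff H : forall s : seq 'I_n, continuous (fun w => \sum_(i <- s) F i w) by exact: H.
elim=> [|x s IH] w.
  have -> : (fun w => \sum_(i <- [::]) F i w) = (fun=> 0) by apply/funext => y; rewrite big_nil.
  exact: cst_continuous.
have -> : (fun w => \sum_(i <- x :: s) F i w) = (fun w => F x w + \sum_(i <- s) F i w).
  by apply/funext => y; rewrite big_cons.
exact: (@continuousD _ _ _ (F x) (fun w => \sum_(i <- s) F i w) w (HF x w) (IH w)).
Qed.

Lemma sumsq_cont N : continuous (fun v : 'cV[R]_N => \sum_(i < N) (v i 0) ^+ 2).
Proof.
apply: (@sum_cont _ N (fun i (w : 'cV[R]_N) => ((w i 0) ^+ 2 : R^o))) => i v.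
have -> : (fun w : 'cV[R]_N => ((w i 0) ^+ 2 : R^o)) = (fun w : 'cV[R]_N => w i 0) \* (fun w : 'cV[R]_N => w i 0).
  by apply/funext => w; rewrite /= expr2.
by apply: continuousM; apply: coord_continuous.
Qed.

Lemma ode_uniq N (A : R -> 'M[R]_N) (a b : R) (u : R -> 'cV[R]_N) :
  (forall i j, {within `[a, b], continuous (fun t => A t i j)}) ->
  a <= b ->
  {within `[a, b], continuous u} ->
  (forall t, a < t < b -> is_derive (t : R^o) 1 (u : R^o -> 'cV[R]_N) (A t *m u t)) ->
  u a = 0 -> forall t, a <= t <= b -> u t = 0.
Proof.
move=> Ac ab uc ud ua0.
have [M M0 HM] : exists2 M : R, 0 <= M & forall t, a <= t <= b -> forall i j, `|A t i j| <= M.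
  have H : forall ij : 'I_N * 'I_N, exists c : R, c \in `[a, b] /\
      forall t, t \in `[a, b] -> `|A t ij.1 ij.2| <= `|A c ij.1 ij.2|.
    move=> [i j].
    have cn : {within `[a,b], continuous (fun t => `|A t i j|)}.
      by move=> x; apply: (continuous_comp (Ac i j x)); exact: (@norm_continuous _ R^o).
    have [c c1 c2] := EVT_max ab cn.
    by exists c.
  have [c Hc] := choice H.
  exists (\sum_ij `|A (c ij) ij.1 ij.2|); first by apply: sumr_ge0 => ij _.
  move=> t tab i j; apply: le_trans ((Hc (i,j)).2 t _) _; first by rewrite in_itv /= tab.
  by rewrite (bigD1 (i,j)) //= ler_wpDr // sumr_ge0.
set c := 2 * N%:R * M.
pose g := fun t : R => \sum_(i < N) (u t i 0) ^+ 2.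
pose h := fun t : R => expR (- c * t) * g t.
have gder : forall t, a < t < b -> is_derive (t : R^o) 1 (g : R^o -> R^o)
    (\sum_(i < N) 2 * u t i 0 * (A t *m u t) i 0).
  move=> t tab.
  have -> : (g : R^o -> R^o) = \sum_(i < N) ((fun s : R^o => (u s i 0 : R^o)) * (fun s : R^o => (u s i 0 : R^o))).
    by apply/funext => s; rewrite /g fct_sumE; apply: eq_bigr => i _; rewrite expr2.
  apply: is_derive_sum => i.
  have e := is_derive_entry i 0 (ud t tab).
  apply: is_derive_eq.
  by rewrite /GRing.scale /=; ring.
have hder : forall t, a < t < b -> is_derive (t : R^o) 1 (h : R^o -> R^o)
    (expR (- c * t) * (\sum_(i < N) 2 * u t i 0 * (A t *m u t) i 0 - c * g t)).
  move=> t tab.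
  apply: is_derive_eq.
    exact: (@is_deriveM R R^o (fun s : R^o => (expR (- c * s) : R^o)) (g : R^o -> R^o) t 1 _ _ (is_derive_expRM (- c) t) (gder t tab)).
  set S := \sum_(i < N) _.
  rewrite -[(g : R^o -> R^o) t]/(g t).
  set G := g t. set E := expR _.
  change (E * S + G * (- c * E) = E * (S - c * G)).
  by ring.
have hcont : {within `[a, b], continuous h}.
  have ec : continuous (fun t : R => expR (- c * t)).
    by move=> y; exact: (is_derive_cont (is_derive_expRM (- c) y)).
  have gc : {within `[a, b], continuous (fun t => \sum_(i < N) (u t i 0) ^+ 2)}.
    move=> x; exact: (@continuous_comp _ _ _ (from_subspace `[a, b] u) (fun v : 'cV[R]_N => \sum_(i < N) (v i 0) ^+ 2) x (uc x) (@sumsq_cont N _)).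
  move=> x.
  have K := (@continuousM R (subspace `[a, b]) (fun t => expR (- c * t)) g x (@continuous_subspaceT _ _ `[a, b] (fun t : R => expR (- c * t)) ec x) (gc x)).
  exact: K.
have ga : g a = 0.
  by rewrite /g ua0; apply: big1 => i _; rewrite mxE expr0n.
have gge0 : forall t, 0 <= g t by move=> t; apply: sumr_ge0 => i _; apply: sqr_ge0.
move=> t /andP [aT tB].
have sub : `[a, t] `<=` `[a, b].
  by apply: subset_itvl; rewrite bnd_simp.
have hd' : forall x, x \in `]a, t[ -> is_derive (x : R^o) 1 (h : R^o -> R^o)
    (expR (- c * x) * (\sum_(i < N) 2 * u x i 0 * (A x *m u x) i 0 - c * g x)).
  move=> x; rewrite in_itv /= => /andP [ax xt]; apply: hder.
  by rewrite ax /= (lt_le_trans xt tB).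
have [x xin Hx] := MVT_segment aT hd' (continuous_subspaceW sub hcont).
have xab : a <= x <= b.
  move: xin; rewrite in_itv /= => /andP [ax xt].
  by rewrite ax /= (le_trans xt tB).
have Q := quad_bound (u x) (HM x xab).
have ht : h t <= 0.
  have -> : h t = expR (- c * x) * (\sum_(i < N) 2 * u x i 0 * (A x *m u x) i 0 - c * g x) * (t - a).
    by rewrite -Hx /h ga mulr0 subr0.
  apply: mulr_le0_ge0; last by rewrite subr_ge0.
  apply: mulr_ge0_le0; first exact: ltW (expR_gt0 _).
  by rewrite subr_le0.
have gt0 : g t = 0.
  apply/eqP; rewrite eq_le gge0 andbT.
  by move: ht; rewrite /h pmulr_rle0 // expR_gt0.
apply/matrixP => i j; rewrite (ord1 j) mxE.
have := psumr_eq0P (fun i _ => sqr_ge0 (u t i 0)) gt0 (i := i) isT.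
by move/eqP; rewrite sqrf_eq0 => /eqP.
Qed.
Lemma D_partial N (f : 'cV[R]_N -> R -> 'cV[R]_N) (x e : 'cV[R]_N) (t : R) :
  'D_e (fun y => f y t) x =
  'D_((e, 0) : ('cV[R]_N * R^o)%type) (fun p : ('cV[R]_N * R^o)%type => f p.1 p.2) (x, t).
Proof.
rewrite /derive /=; congr lim; f_equal.
by rewrite funeqE => h; rewrite scaler0 add0r.
Qed.

Lemma linA_cont N (f : 'cV[R]_N -> R -> 'cV[R]_N) (xs : R -> 'cV[R]_N) :
  C1 f -> (forall t : R^o, is_derive t 1 (xs : R^o -> 'cV[R]_N) (f (xs t) t)) ->
  forall i j, continuous (fun t : R => linA f xs t i j).
Proof.
move=> [_ Dc] xd i j t.
have -> : (fun t : R => linA f xs t i j) =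
   (fun M : 'cV[R]_N => M i 0) \o (fun p : ('cV[R]_N * R^o)%type =>
       'D_((delta_mx j 0, 0) : ('cV[R]_N * R^o)%type) (fun p : ('cV[R]_N * R^o)%type => f p.1 p.2) p)
     \o (fun s : R => ((xs s, s) : ('cV[R]_N * R^o)%type)).
  by apply/funext => s; rewrite /linA /= mxE D_partial.
apply: continuous_comp.
  exact: (cvg_pair (is_derive_cont (xd t)) cvg_id).
apply: continuous_comp; first exact: (Dc _).
exact: (@coord_continuous R N 1 i 0 _).
Qed.

Lemma linA_per N (f : 'cV[R]_N -> R -> 'cV[R]_N) (xs : R -> 'cV[R]_N) (T : R) :
  (forall x t, f x (t + T) = f x t) -> (forall t, xs (t + T) = xs t) ->
  forall t, linA f xs (t + T) = linA f xs t.
Proof.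
move=> fp xp t; rewrite /linA xp.
have -> : (fun x => f x (t + T)) = (fun x => f x t) by apply/funext => x; rewrite fp.
by [].
Qed.
Lemma per_real N (A : R -> 'M[R]_N) (Y0 : R -> 'M[R]_N) (T : R) :
  (forall i j, continuous (fun t => A t i j)) -> (forall t, A (t + T) = A t) ->
  (forall t : R^o, is_derive t 1 (Y0 : R^o -> 'M[R]_N) (A t *m Y0 t)) -> Y0 0 = 1%:M ->
  forall v : 'cV[R]_N, Y0 T *m v = v -> forall s, T <= s -> Y0 s *m v = Y0 (s - T) *m v.
Proof.
move=> Ac Ap Yd Y00 v Hv s Ts.
pose u := fun t => Y0 t *m v - Y0 (t - T) *m v.
have ud : forall t : R^o, is_derive t 1 (u : R^o -> 'cV[R]_N) (A t *m u t).
  move=> t.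
  have -> : (u : R^o -> 'cV[R]_N) = (fun s : R^o => Y0 s *m v) - (fun s : R^o => Y0 (s + - T) *m v).
    by apply/funext => x.
  apply: is_derive_eq.
    apply: is_deriveB; first exact: (is_derive_mulmxr v (Yd t)).
    apply: (is_derive_mulmxr v (F := fun s : R^o => Y0 (s + - T))).
    exact: (is_derive_shiftarg (Yd (t + - T))).
  have -> : A (t + - T) = A t by have := Ap (t - T); rewrite subrK => ->.
  by rewrite /u mulmxBr !mulmxA.
have := @ode_uniq N A T s u (fun i j => continuous_subspaceT (Ac i j)) Ts
  (continuous_subspaceT (fun x => is_derive_cont (ud x))) (fun t _ => ud t).
move=> H.
have : u s = 0.
  apply: H; last by rewrite lexx Ts.
  by rewrite /u subrr Hv Y00 mul1mx subrr.
by move/eqP; rewrite subr_eq0 => /eqP.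
Qed.

Lemma per_cplx N (A : R -> 'M[R]_N) (Y0 : R -> 'M[R]_N) (T : R) :
  (forall i j, continuous (fun t => A t i j)) -> (forall t, A (t + T) = A t) ->
  (forall t : R^o, is_derive t 1 (Y0 : R^o -> 'M[R]_N) (A t *m Y0 t)) -> Y0 0 = 1%:M ->
  forall w : 'cV[CC]_N, cmx (Y0 T) *m w = w -> forall s, T <= s ->
  cmx (Y0 s) *m w = cmx (Y0 (s - T)) *m w.
Proof.
move=> Ac Ap Yd Y00 w Hw s Ts.
apply: reimV_inj; rewrite !(reVM, imVM); apply: (per_real Ac Ap Yd Y00) => //.
  by rewrite -reVM Hw.
by rewrite -imVM Hw.
Qed.

Lemma basis_sol N (A : R -> 'M[R]_N) (Y0 : R -> 'M[R]_N) (T : R) (K : 'M[R]_N) :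
  0 < T ->
  (forall i j, continuous (fun t => A t i j)) -> (forall t, A (t + T) = A t) ->
  (forall t : R^o, is_derive t 1 (Y0 : R^o -> 'M[R]_N) (A t *m Y0 t)) -> Y0 0 = 1%:M ->
  forall w : 'cV[CC]_N, cmx (Y0 T) *m w = w ->
  let y := fun s => cmx (Y0 (s + T)) *m w in
  (forall D, ccont_within D y) /\ dde_solution A K T y y /\
  (forall s, -T <= s -> y (T + s) = y s).
Proof.
move=> T0 Ac Ap Yd Y00 w Hw y.
have Pc := per_cplx Ac Ap Yd Y00 Hw.
have dre : forall t : R^o, is_derive t 1 (fun s : R^o => reV (y s)) (reV (cmx (A t) *m y t)).
  move=> t.
  have -> : (fun s : R^o => reV (y s)) = (fun s : R^o => Y0 (s + T) *m reV w).
    by apply/funext => s; rewrite /y reVM.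
  apply: is_derive_eq.
    apply: (is_derive_mulmxr (reV w) (F := fun s : R^o => Y0 (s + T))).
    exact: (is_derive_shiftarg (Yd (t + T))).
  by rewrite /y !reVM Ap mulmxA.
have dim : forall t : R^o, is_derive t 1 (fun s : R^o => imV (y s)) (imV (cmx (A t) *m y t)).
  move=> t.
  have -> : (fun s : R^o => imV (y s)) = (fun s : R^o => Y0 (s + T) *m imV w).
    by apply/funext => s; rewrite /y imVM.
  apply: is_derive_eq.
    apply: (is_derive_mulmxr (imV w) (F := fun s : R^o => Y0 (s + T))).
    exact: (is_derive_shiftarg (Yd (t + T))).
  by rewrite /y !imVM Ap mulmxA.
have yper : forall t, 0 <= t -> y (t - T) = y t.
  move=> t t0; rewrite /y subrK (Pc (t + T)) ?addrK //.
  by rewrite lerDr.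
have cc : forall D, ccont_within D y.
  move=> D; split.
    exact: (continuous_subspaceT (fun x => is_derive_cont (dre x))).
  exact: (continuous_subspaceT (fun x => is_derive_cont (dim x))).
split => //; split; last first.
  move=> s sT; rewrite /y -addrA (Pc (T + (s + T))); last by rewrite lerDl -lerBlDr sub0r.
  by rewrite (addrC T) addrK.
split => //; split; first exact: cc.
split.
  move=> t t0; rewrite yper ?ltW // subrr mulmx0 addr0.
  by split; [exact: dre | exact: dim].
rewrite yper // subrr mulmx0 addr0.
by split; [exact: (is_derive_right (dre 0)) | exact: (is_derive_right (dim 0))].
Qed.

Lemma real_sol N (A : R -> 'M[R]_N) (Y0 : R -> 'M[R]_N) (T : R) :
  0 < T -> (forall i j, continuous (fun t => A t i j)) ->
  (forall t : R^o, is_derive t 1 (Y0 : R^o -> 'M[R]_N) (A t *m Y0 t)) -> Y0 0 = 1%:M ->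
  forall (z : R -> 'cV[R]_N) (r : 'cV[R]_N), {within `[0, T], continuous z} ->
  (forall t, 0 < t < T -> is_derive (t : R^o) 1 (z : R^o -> 'cV[R]_N) (A t *m z t)) ->
  z 0 = r -> forall t, 0 <= t <= T -> z t = Y0 t *m r.
Proof.
move=> T0 Ac Yd Y00 z r zc zd z0 t tT.
pose u := fun t => z t - Y0 t *m r.
have ud : forall t, 0 < t < T -> is_derive (t : R^o) 1 (u : R^o -> 'cV[R]_N) (A t *m u t).
  move=> x xT.
  have -> : (u : R^o -> 'cV[R]_N) = (z : R^o -> 'cV[R]_N) - (fun s : R^o => Y0 s *m r).
    by apply/funext => s.
  apply: is_derive_eq.
    apply: is_deriveB; first exact: (zd x xT).
    exact: (is_derive_mulmxr r (Yd x)).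
  by rewrite /u mulmxBr !mulmxA.
have uc : {within `[0, T], continuous u}.
  move=> x.
  have K := @continuousB R 'cV[R]_N (subspace `[0, T]) z (fun s => Y0 s *m r) x (zc x)
    (@continuous_subspaceT _ _ `[0, T] (fun s : R => Y0 s *m r) (fun y => is_derive_cont (is_derive_mulmxr r (Yd y))) x).
  exact: K.
have := @ode_uniq N A 0 T u (fun i j => continuous_subspaceT (Ac i j)) (ltW T0) uc ud.
move=> H; have : u t = 0.
  apply: H => //; by rewrite /u z0 Y00 mul1mx subrr.
by move/eqP; rewrite subr_eq0 => /eqP.
Qed.

Lemma span_sol N (A : R -> 'M[R]_N) (Y0 : R -> 'M[R]_N) (T : R) (K : 'M[R]_N) :
  0 < T -> (forall i j, continuous (fun t => A t i j)) ->
  (forall t : R^o, is_derive t 1 (Y0 : R^o -> 'M[R]_N) (A t *m Y0 t)) -> Y0 0 = 1%:M ->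
  forall phi, Y1_eigenspace1 A K T phi ->
  cmx (Y0 T) *m phi 0 = phi 0 /\
  forall s, -T <= s <= 0 -> phi s = cmx (Y0 (s + T)) *m phi 0.
Proof.
move=> T0 Ac Yd Y00 phi [phic [y [[yphi [[ycr yci] [yd yr]]] yeig]]].
have mT0 : -T <= 0 by rewrite oppr_le0 ltW.
have y0 : y 0 = phi 0 by apply: yphi; rewrite mT0 lexx.
have sub : `[0, T] `<=` `[- T, +oo[.
  move=> x; rewrite /= !in_itv /= andbT => /andP [x0 _].
  exact: le_trans mT0 x0.
have ydiff : forall t, 0 < t <= T -> y t - y (t - T) = 0.
  move=> t /andP [t0 tT].
  have r : - T <= t - T <= 0 by apply/andP; split; lra.
  have e1 := yeig (t - T) r; rewrite addrC subrK in e1.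
  by rewrite e1 (yphi _ r) subrr.
have dre : forall t, 0 < t < T -> is_derive (t : R^o) 1 (fun s : R^o => reV (y s)) (A t *m reV (y t)).
  move=> t /andP [t0 tT]; have [d _] := yd t t0.
  by move: d; rewrite ydiff ?t0 ?ltW // mulmx0 addr0 reVM.
have dim : forall t, 0 < t < T -> is_derive (t : R^o) 1 (fun s : R^o => imV (y s)) (A t *m imV (y t)).
  move=> t /andP [t0 tT]; have [_ d] := yd t t0.
  by move: d; rewrite ydiff ?t0 ?ltW // mulmx0 addr0 imVM.
have ysol : forall t, 0 <= t <= T -> y t = cmx (Y0 t) *m phi 0.
  move=> t tT; apply: reimV_inj; rewrite ?(reVM, imVM).
    apply: (real_sol T0 Ac Yd Y00 (z := fun s => reV (y s))) => //.
      exact: continuous_subspaceW sub ycr.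
    by rewrite y0.
  apply: (real_sol T0 Ac Yd Y00 (z := fun s => imV (y s))) => //.
    exact: continuous_subspaceW sub yci.
  by rewrite y0.
have yT : y T = phi 0.
  by have := yeig 0; rewrite addr0 => ->; rewrite // mT0 lexx.
split.
  by rewrite -(ysol T) ?lexx ?ltW.
move=> s sT; rewrite -(yeig s sT) ysol ?(addrC s) //.
move: sT => /andP [s1 s2].
by apply/andP; split; lra.
Qed.

Unset Implicit Arguments.

Theorem theorem1 (N : nat) (f : 'cV[R]_N -> R -> 'cV[R]_N) (T : R)
  (xs : R -> 'cV[R]_N) (K : 'M[R]_N) (Y0 : R -> 'M[R]_N) :
  0 < T ->
  C1 f ->
  (forall x t, f x (t + T) = f x t) ->
  periodic_solution f T xs ->
  fundamental_solution (linA f xs) Y0 ->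
  has_dim `[-T, 0] (Y1_eigenspace1 (linA f xs) K T) (geom_mult1 (Y0 T)).
Proof.
move=> T0 fC1 fper [xsper xsd] [Y00 Yd].
have Ac := linA_cont fC1 xsd.
have Ap := linA_per fper xsper.
set A := linA f xs in Ac Ap Yd *.
rewrite /geom_mult1.
set B := (cmx (Y0 T) - 1%:M)^T.
set Kb := row_base (kermx B).
pose v := fun i : 'I_(\rank (kermx B)) => (row i Kb)^T.
have keyK : forall w : 'cV[CC]_N, (cmx (Y0 T) *m w == w) = (w^T <= Kb)%MS.
  move=> w; rewrite eq_row_base.
  have E : w^T *m B = ((cmx (Y0 T) *m w) - w)^T by rewrite /B -trmx_mul mulmxBl mul1mx.
  apply/eqP/sub_kermxP => H.
    by rewrite E H subrr trmx0.
  apply/eqP; rewrite -subr_eq0; apply/eqP; move: H; rewrite E => /(congr1 trmx).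
  by rewrite trmxK trmx0.
have vK : forall i, cmx (Y0 T) *m v i = v i.
  by move=> i; apply/eqP; rewrite keyK /v trmxK row_sub.
have mT0 : -T <= 0 by rewrite oppr_le0 ltW.
exists (fun i s => cmx (Y0 (s + T)) *m v i).
split; [|split].
- move=> i; have [cc [dd ee]] := basis_sol K T0 Ac Ap Yd Y00 (vK i).
  split; first exact: cc.
  exists (fun s => cmx (Y0 (s + T)) *m v i); split => //.
  by move=> s /andP [s1 _]; exact: ee s s1.
- move=> c Hc i.
  have H0 : \sum_i c i *: v i = 0.
    have := Hc 0; rewrite /= in_itv /= mT0 lexx => /(_ isT).
    by under eq_bigr do rewrite add0r vK.
  have H1 : (\row_j c j) *m Kb = 0 *m Kb.
    rewrite mul0mx mulmx_sum_row; apply: trmx_inj; rewrite trmx0 raddf_sum /=.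
    rewrite -[RHS]H0; apply: eq_bigr => j _; rewrite mxE.
    by rewrite linearZ.
  have := row_free_inj (row_base_free (kermx B)) H1.
  by move/matrixP => /(_ 0 i); rewrite !mxE.
- move=> phi Hphi.
  have [Kw Hs] := span_sol T0 Ac Yd Y00 Hphi.
  have : ((phi 0)^T <= Kb)%MS by rewrite -keyK Kw.
  case/submxP => D HD.
  have Hp : phi 0 = \sum_i D 0 i *: v i.
    rewrite -[phi 0]trmxK HD mulmx_sum_row raddf_sum /=.
    by apply: eq_bigr => j _; rewrite linearZ.
  exists (fun i => D 0 i) => s; rewrite /= in_itv /= => sT.
  rewrite Hs // {1}Hp mulmx_sumr; apply: eq_bigr => j _.
  by rewrite scalemxAr.
Qed.
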